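(* Let $r\ge 3$ be an integer and let $x>1$ be a real number such that $\binom{x}{2}=\frac{x(x-1)}{2}$ is a positive integer. Then \[f\left(r,3,\tfrac{x(x-1)}{2}\right)\le \frac{x(x-1)(x-2)}{6}.\]
   Context: $\mathbb{N}^{(s)}$ denotes the family of all $s$-element subsets of $\mathbb{N}$. For integers $0\le k\le r$ and $b\ge 0$, $f(r,k,b)$ denotes the maximum of $|\mathcal{A}|$ over all pairs of families $\mathcal{A}\subset\mathbb{N}^{(r)}$, $\mathcal{B}\subset\mathbb{N}^{(r-1)}$ with $|\mathcal{B}|=b$ such that for every $A\in\mathcal{A}$ there exist $k$ distinct sets $B_1,\dots,B_k\in\mathcal{B}$ with $B_i\subset A$ for all $i$. *)

(* Defs.v *)
From HB Require Import structures.
From mathcomp Require Import all_boot all_order all_algebra.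
From mathcomp Require Import finmap.
From mathcomp Require Import reals.
Set Implicit Arguments. Unset Strict Implicit. Unset Printing Implicit Defensive.
Import Order.TTheory GRing.Theory Num.Theory.
Local Open Scope fset_scope.

Definition admissible (r k b : nat) (A B : {fset {fset nat}}) : Prop :=
  [/\ (forall S, S \in A -> #|` S| = r),
      (forall T, T \in B -> #|` T| = r.-1),
      #|` B| = b &
      (forall S, S \in A -> k <= #|` [fset T in B | T `<=` S]|)%N ].

(* Main.v *)
Require Import Defs.
From HB Require Import structures.
From mathcomp Require Import all_boot all_order all_algebra.
From mathcomp Require Import finmap.
From mathcomp Require Import reals.
From mathcomp Require Import zify ring lra.
Import Order.TTheory GRing.Theory Num.Theory.
Set Implicit Arguments. Unset Strict Implicit. Unset Printing Implicit Defensive.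
Local Open Scope fset_scope.

Section Comb.
Implicit Types (S T : {fset nat}) (A B : {fset {fset nat}}).

Lemma cardF (K : choiceType) (X : {fset K}) (P : pred K) :
  #|` [fset x in X | P x]| = (\sum_(x <- X) P x)%N.
Proof.
rewrite card_fset_sum1 -big_fset_condE big_mkcond /=.
by apply: eq_bigr => i _; case: (P i).
Qed.

Lemma sub_card_eq (K : choiceType) (X Y : {fset K}) :
  X `<=` Y -> (#|` Y| <= #|` X|)%N -> X = Y.
Proof. by move=> h1 h2; apply/eqP; rewrite eqEfcard h1 h2. Qed.

Lemma add1_ex S T : T `<=` S -> #|` S| = (#|` T|).+1 ->
  exists w, [/\ w \in S, w \notin T & S = w |` T].
Proof.
move=> sub cS.
have : #|` S `\` T| == 1%N by rewrite cardfsDS // cS subSnn.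
case/cardfs1P => w hw.
have wST : w \in S `\` T by rewrite hw inE.
move: (wST); rewrite inE => /andP [wT wS].
exists w; split => //.
apply/esym/sub_card_eq.
  by rewrite fsubUset fsub1set wS sub.
by rewrite cardfsU1 wT cS.
Qed.

Lemma union2 S T1 T2 : T1 != T2 -> #|` T1| = #|` T2| -> T1 `<=` S -> T2 `<=` S ->
  #|` S| = (#|` T1|).+1 -> S = T1 `|` T2.
Proof.
move=> ne c12 s1 s2 cS.
apply/esym/sub_card_eq; first by rewrite fsubUset s1 s2.
rewrite cS.
have : T1 `<` T1 `|` T2.
  rewrite fproperEneq fsubsetUl andbT.
  apply/negP => /eqP e.
  have s21 : T2 `<=` T1 by rewrite e fsubsetUr.
  have : T2 = T1 by apply: sub_card_eq => //; rewrite c12.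
  by move=> e'; rewrite e' eqxx in ne.
by move/fproper_ltn_card.
Qed.

Lemma two_elems (K : choiceType) (F : {fset K}) : (2 <= #|` F|)%N ->
  exists a b, [/\ a \in F, b \in F & a != b].
Proof.
move=> h.
have : F != fset0 by rewrite -cardfs_gt0; lia.
case/fset0Pn => a aF.
have : F `\ a != fset0.
  rewrite -cardfs_gt0; move: h; rewrite (cardfsD1 a) aF /=; lia.
case/fset0Pn => b /fsetD1P [ba bF].
by exists a, b; split => //; rewrite eq_sym.
Qed.


Lemma sum_neq (K : choiceType) (F : {fset K}) :
  (\sum_(a <- F) \sum_(b <- F) (a != b) = #|` F| * (#|` F| - 1))%N.
Proof.
rewrite card_fset_sum1 big_distrl /= -card_fset_sum1 big_seq_cond [RHS]big_seq_cond.
apply: eq_bigr => a /andP [aF _].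
rewrite mul1n -cardF.
have -> : [fset x in F | a != x] = F `\ a.
  by apply/fsetP => x; rewrite !inE eq_sym andbC.
by rewrite (cardfsD1 a F) aF /= add1n subn1.
Qed.

Lemma card_im_le (K K' : choiceType) (f : K -> K') (X : {fset K}) :
  (#|` f @` X| <= #|` X|)%N.
Proof. exact: leq_imfset_card. Qed.

Variable r : nat.
Hypothesis hr : (0 < r)%N.

Definition mB B S := #|` [fset T in B | T `<=` S]|.
Definition Phi A B := (\sum_(S <- A) mB B S)%N.
Definition VB B := \bigcup_(T <- B) T.
Definition dv B v := #|` [fset T in B | v \in T]|.
Definition Bv B (v : nat) := [fset T in B | v \notin T].
Definition Av A (v : nat) := [fset S in A | v \notin S].
Definition good A B := [/\ forall T, T \in B -> #|` T| = r.-1,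
   forall S, S \in A -> #|` S| = r & forall S, S \in A -> (3 <= mB B S)%N].

Lemma T_sub_V B T : T \in B -> T `<=` VB B.
Proof. by move=> TB; apply: (bigfcup_sup (P := xpredT)). Qed.

Lemma rS : r = (r.-1).+1.
Proof. by rewrite prednK. Qed.

Lemma S_sub_V A B S : good A B -> S \in A -> S `<=` VB B.
Proof.
case=> hB hA hm SA.
have := hm S SA; rewrite /mB => h3.
have [T1 [T2 [h1 h2 ne]]] : exists a b, [/\ a \in [fset T in B | T `<=` S],
    b \in [fset T in B | T `<=` S] & a != b] by apply: two_elems; lia.
move: h1 h2; rewrite !inE => /andP [T1B T1S] /andP [T2B T2S].
have -> : S = T1 `|` T2.
  apply: union2 => //; first by rewrite (hB _ T1B) (hB _ T2B).
  by rewrite (hA _ SA) (hB _ T1B) -rS.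
by rewrite fsubUset !T_sub_V.
Qed.

Lemma case1 A B : good A B -> (Phi A B <= #|` B| * (#|` VB B| - r.-1))%N.
Proof.
move=> g; have [hB hA hm] := g.
rewrite /Phi /mB.
under eq_bigr => S _ do rewrite cardF.
rewrite exchange_big /= card_fset_sum1 big_distrl /= big_seq [X in (_ <= X)%N]big_seq.
apply: leq_sum => T TB; rewrite mul1n -cardF.
have -> : (#|` VB B| - r.-1)%N = #|` VB B `\` T|.
  by rewrite cardfsDS ?T_sub_V // (hB _ TB).
apply: leq_trans (card_im_le (fun w => [fset w] `|` T) (VB B `\` T)).
apply: fsubset_leq_card; apply/fsubsetP => S; rewrite !inE => /andP [SA TS].
have cS : #|` S| = (#|` T|).+1 by rewrite (hA _ SA) (hB _ TB) -rS.
have [w [wS wT eS]] := add1_ex TS cS.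
apply/imfsetP; exists w => //=.
by rewrite inE wT (fsubsetP (S_sub_V g SA)).
Qed.


Lemma mB_v B S v : v \notin S -> mB (Bv B v) S = mB B S.
Proof.
move=> vS; rewrite /mB /Bv; congr (#|` _|); apply/fsetP => T; rewrite !inE.
case TS: (T `<=` S); rewrite ?andbF ?andbT //.
case: (T \in B) => //=; apply/negP => vT.
by move: vS; rewrite (fsubsetP TS v vT).
Qed.

Lemma card_Bv B v : (#|` Bv B v| + dv B v = #|` B|)%N.
Proof.
rewrite /Bv /dv !cardF card_fset_sum1 -big_split /=.
by apply: eq_bigr => T _; case: (v \in T).
Qed.

Lemma good_v A B v : good A B -> good (Av A v) (Bv B v).
Proof.
case=> hB hA hm; split.
- by move=> T; rewrite inE => /andP [TB _]; apply: hB.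
- by move=> S; rewrite inE => /andP [SA _]; apply: hA.
- by move=> S; rewrite inE => /andP [SA vS]; rewrite mB_v //; apply: hm.
Qed.

Lemma Phi_v_eq A B v :
  Phi (Av A v) (Bv B v) = (\sum_(S <- A | v \notin S) mB B S)%N.
Proof.
rewrite /Phi /Av -big_fset_condE; apply: eq_bigr => S vS; exact: mB_v.
Qed.

Lemma Phi_split A B v :
  Phi A B = (Phi (Av A v) (Bv B v) + \sum_(S <- A | v \in S) mB B S)%N.
Proof.
rewrite Phi_v_eq /Phi (bigID (fun S => v \notin S)) /=.
by under [X in (_ + X)%N = _]eq_bigl => S do rewrite negbK.
Qed.

Lemma dv_pos B v : v \in VB B -> (0 < dv B v)%N.
Proof.
case/bigfcupP => T /andP [TB _] vT.
rewrite /dv cardfs_gt0; apply/fset0Pn; exists T; rewrite !inE; by apply/andP.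
Qed.

Lemma sum_Bv B : (forall T, T \in B -> #|` T| = r.-1) ->
  (\sum_(v <- VB B) #|` Bv B v| = #|` B| * (#|` VB B| - r.-1))%N.
Proof.
move=> hB.
under eq_bigr => v _ do rewrite /Bv cardF.
rewrite exchange_big /= card_fset_sum1 big_distrl /= big_seq [RHS]big_seq.
apply: eq_bigr => T TB; rewrite mul1n -cardF -(hB _ TB) -cardfsDS ?T_sub_V //.
by congr (#|` _|); apply/fsetP => w; rewrite !inE andbC.
Qed.

Lemma sum_Phi_v A B : good A B ->
  (Phi A B * (#|` VB B| - r) <= \sum_(v <- VB B) Phi (Av A v) (Bv B v))%N.
Proof.
case=> hB hA hm.
under [X in (_ <= X)%N]eq_bigr => v _ do rewrite Phi_v_eq big_mkcond /=.
rewrite exchange_big /= /Phi big_distrl /= big_seq [X in (_ <= X)%N]big_seq.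
apply: leq_sum => S SA.
rewrite (eq_bigr (fun v => mB B S * (v \notin S))%N); last first.
  by move=> v _; case: (v \notin S); rewrite ?muln1 ?muln0.
rewrite -big_distrr /= leq_mul2l; apply/orP; right.
rewrite -cardF.
have -> : [fset x in VB B | x \notin S] = VB B `\` S.
  by apply/fsetP => w; rewrite !inE andbC.
rewrite cardfsD -(hA _ SA) leq_sub2l //.
by apply: fsubset_leq_card; rewrite fsubsetIr.
Qed.


Lemma mB_le_p A B v S : good A B -> S \in A -> v \in S ->
  (mB B S <= (#|` [fset T in [fset T in B | v \in T] | T `<=` S]|).+1)%N.
Proof.
case=> hB hA hm SA vS; rewrite /mB.
set P := [fset T in [fset T in B | v \in T] | T `<=` S].
have sub : [fset T in B | T `<=` S] `<=` P `|` [fset S `\ v].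
  apply/fsubsetP => T; rewrite !inE => /andP [TB TS].
  case vT: (v \in T).
    by rewrite TB TS.
  rewrite andbF /=; apply/eqP; apply: sub_card_eq.
    apply/fsubsetP => w wT; rewrite inE (fsubsetP TS w wT) andbT.
    rewrite inE; by apply: (contraFN _ vT) => /eqP <-.
  have := cardfsD1 v S; rewrite vS (hA _ SA) (hB _ TB) => e.
  by rewrite {1}rS e add1n.
apply: leq_trans (fsubset_leq_card sub) _.
by rewrite cardfsU cardfs1 addn1 leq_subr.
Qed.

Lemma p_pairs (F : {fset {fset nat}}) S :
  (#|` [fset T in F | T `<=` S]| * (#|` [fset T in F | T `<=` S]| - 1) =
  \sum_(T1 <- F) \sum_(T2 <- F) [&& T1 != T2, T1 `<=` S & T2 `<=` S])%N.
Proof.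
rewrite -sum_neq -big_fset_condE.
under eq_bigr do rewrite -big_fset_condE.
rewrite [LHS]big_mkcond; apply: eq_bigr => a _.
case aS: (a `<=` S) => /=.
  rewrite big_mkcond; apply: eq_bigr => b _.
  by case: (b `<=` S); rewrite ?andbT ?andbF.
by rewrite big1 // => b _; rewrite andbF.
Qed.

Lemma uniq_S A B T1 T2 : good A B -> T1 \in B -> T2 \in B -> T1 != T2 ->
  (\sum_(S <- A) ((T1 `<=` S) && (T2 `<=` S)) <= 1)%N.
Proof.
case=> hB hA hm T1B T2B ne.
rewrite -(cardF A (fun S => (T1 `<=` S) && (T2 `<=` S))).
apply: leq_trans (fsubset_leq_card (_ : _ `<=` [fset T1 `|` T2])) _;
  last by rewrite cardfs1.
apply/fsubsetP => S; rewrite !inE => /andP [SA /andP [s1 s2]].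
apply/eqP; apply: union2 => //; first by rewrite (hB _ T1B) (hB _ T2B).
by rewrite (hA _ SA) (hB _ T1B) -rS.
Qed.

Lemma case2 A B v : good A B ->
  (2 * \sum_(S <- A | v \in S) mB B S <= 3 * (dv B v * (dv B v - 1)))%N.
Proof.
move=> g; have [hB hA hm] := g.
set D := [fset T in B | v \in T].
have step1 : (2 * \sum_(S <- A | v \in S) mB B S <=
    3 * \sum_(S <- A | v \in S) (#|` [fset T in D | T `<=` S]| *
                                   (#|` [fset T in D | T `<=` S]| - 1)))%N.
  rewrite big_distrr [X in (_ <= X)%N]big_distrr /= big_seq_cond [X in (_ <= X)%N]big_seq_cond.
  apply: leq_sum => S /andP [SA vS].
  have h1 := mB_le_p g SA vS; have h3 := hm _ SA.
  move: h1 h3; rewrite -/D; set p := #|` _|; move: (mB B S) => m h1 h3.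
  nia.
apply: leq_trans step1 _; rewrite leq_mul2l /=.
under eq_bigr => S _ do rewrite p_pairs.
rewrite exchange_big /=.
under eq_bigr => T1 _ do rewrite exchange_big /=.
rewrite /dv -/D -sum_neq big_seq [X in (_ <= X)%N]big_seq.
apply: leq_sum => T1 T1D.
rewrite big_seq [X in (_ <= X)%N]big_seq.
apply: leq_sum => T2 T2D.
have T1B : T1 \in B by move: T1D; rewrite !inE => /andP [].
have T2B : T2 \in B by move: T2D; rewrite !inE => /andP [].
case ne: (T1 != T2); last by rewrite big1.
apply: leq_trans (uniq_S g T1B T2B ne).
rewrite big_mkcond /=; apply: leq_sum => S _.
by case: (v \in S).
Qed.

End Comb.

Local Open Scope ring_scope.

Section Num.
Variable R : realType.

Lemma root_ex (y : nat) : exists z : R, 1 <= z /\ z * (z - 1) / 2 = y%:R.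
Proof.
have hy : 0 <= (y%:R : R) := ler0n _ _.
set s := Num.sqrt (1 + 8 * (y%:R : R)).
have h0 : 0 <= 1 + 8 * (y%:R : R) by rewrite addr_ge0 // mulr_ge0.
have hs : s ^+ 2 = 1 + 8 * y%:R by rewrite sqr_sqrtr.
have hs1 : 1 <= s.
  rewrite -(sqrtr1 R) /s ler_sqrt //; lra.
exists ((1 + s) / 2); split; first lra.
rewrite expr2 in hs. nra.
Qed.

Lemma root_mono (z1 z2 : R) : 1 <= z1 -> 1 <= z2 -> z1 * (z1 - 1) <= z2 * (z2 - 1) -> z1 <= z2.
Proof. move=> h1 h2 h; rewrite leNgt; apply/negP => lt. nra. Qed.

Lemma num_case2 (x z b d : R) : 1 <= x -> 1 <= z -> x * (x - 1) / 2 = b ->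
  z * (z - 1) / 2 = b - d -> 0 <= d -> d <= x - 1 ->
  (z - 2) * (b - d) + 3 * d * (d - 1) / 2 <= (x - 2) * b.
Proof.
move=> hx hz hb hz2 hd0 hd.
have zx : z <= x by apply: root_mono => //; lra.
have zx1 : x - 1 <= z.
  case: (lerP 2 x) => h2; last lra.
  have e1 : x * (x - 1) = 2 * b by lra.
  have e2 : z * (z - 1) = 2 * (b - d) by lra.
  apply: root_mono => //; first lra.
  rewrite e2; have -> : (x - 1) * (x - 1 - 1) = x * (x - 1) - 2 * (x - 1) by ring.
  rewrite e1; lra.
set t := x - z. set u := x + z - 1.
have e : (x - 2) * b - ((z - 2) * (b - d) + 3 * d * (d - 1) / 2)
   = t * (1 - t) * (3 * u ^+ 2 - 1 - t) / 8.
  rewrite /t /u. rewrite -hz2 -hb. have -> : d = x * (x - 1) / 2 - z * (z - 1) / 2 by lra.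
  by field.
have hu : 1 <= u by rewrite /u; lra.
have ht : t <= 1 by rewrite /t; lra.
have ht0 : 0 <= t by rewrite /t; lra.
have h1 : 0 <= t * (1 - t) by apply: mulr_ge0; lra.
have h2 : 0 <= 3 * u ^+ 2 - 1 - t by rewrite expr2; nra.
have : 0 <= t * (1 - t) * (3 * u ^+ 2 - 1 - t) / 8.
  by apply: divr_ge0 => //; apply: mulr_ge0.
lra.
Qed.

Lemma num_case3 (x z b d : R) : 1 <= x -> 1 <= z -> x * (x - 1) / 2 = b ->
  z * (z - 1) / 2 = b - d -> 1 <= d -> x - 1 <= d ->
  (z - 2) * (b - d) <= (x - 3) * (b - d).
Proof.
move=> hx hz hb hz2 hd0 hd.
have bd : 0 <= b - d by nra.
have x2 : 2 <= x by nra.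
have zx : z <= x - 1 by apply: root_mono => //; [lra | nra].
by apply: ler_wpM2r => //; lra.
Qed.

End Num.

Section Main.
Variable R : realType.

Lemma mB_le_b B S : (mB B S <= #|` B|)%N.
Proof.
by apply: fsubset_leq_card; apply/fsubsetP => T; rewrite inE => /andP [].
Qed.

Lemma main_ind r : (0 < r)%N -> forall b (A B : {fset {fset nat}}), #|` B| = b ->
  good r A B -> forall z : R, 1 <= z -> z * (z - 1) / 2 = b%:R ->
  (Phi A B)%:R <= (z - 2) * b%:R.
Proof.
move=> hr; elim/ltn_ind => b IH A B cB g z z1 zb.
have [hB hA hm] := g.
have h1 := case1 hr g; rewrite cB in h1.
have b0 : 0 <= (b%:R : R) := ler0n _ _.
case: (posnP (Phi A B)) => [->|Ppos].
  case: (posnP b) => [->|bpos]; first by rewrite mulr0.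
  have : 1 <= (b%:R : R) by rewrite ler1n.
  move=> b1; rewrite mulr_ge0 //; nra.
have [S SA] : exists S, S \in A.
  case: (A =P fset0) => [eA|/eqP]; last by case/fset0Pn => S SA; exists S.
  by move: Ppos; rewrite /Phi eA big_seq_fset0.
have b3 : (3 <= b)%N by rewrite -cB; apply: leq_trans (hm _ SA) (mB_le_b _ _).
have b3R : 3 <= (b%:R : R) by rewrite (ler_nat R 3 b).
have z3 : 3 <= z by nra.
set n := #|` VB B|; set k := (n - r.-1)%N.
case: (lerP (k%:R) (z - 2)) => hk.
  apply: le_trans (_ : ((b * k)%N%:R : R) <= _); first by rewrite ler_nat.
  by rewrite natrM; nra.
case: (boolP (has (fun v => (dv B v)%:R < z - 1) (VB B))) => hv.
  case/hasP: hv => v vV dvlt.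
  have d1 := dv_pos vV.
  have cBv := card_Bv B v.
  set d := dv B v in dvlt d1 cBv *.
  have db : (d <= b)%N by rewrite -cB -cBv leq_addl.
  have cBv' : #|` Bv B v| = (b - d)%N by rewrite -cB -cBv addnK.
  have ltb : (b - d < b)%N by lia.
  have [z' [z'1 z'b]] := root_ex R (b - d).
  have IHv := IH _ ltb (Av A v) (Bv B v) cBv' (good_v v g) z' z'1 z'b.
  have c2 := case2 hr v g.
  rewrite (Phi_split A B v) natrD.
  move: c2 IHv; rewrite -/d.
  set s := (\sum_(S <- A | v \in S) mB B S)%N => c2 IHv.
  have sR : (s%:R : R) <= 3 * d%:R * (d%:R - 1) / 2.
    have : ((2 * s)%N%:R : R) <= (3 * (d * (d - 1)))%N%:R by rewrite ler_nat.
    rewrite !natrM natrB // mulr1n; lra.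
  rewrite natrB // in z'b IHv.
  have := num_case2 z1 z'1 zb z'b (ler0n _ _) (ltW dvlt).
  lra.
have hall : forall v, v \in VB B -> (Phi (Av A v) (Bv B v))%:R <= (z - 3) * (#|` Bv B v|)%:R.
  move=> v vV.
  have d1 := dv_pos vV.
  have cBv := card_Bv B v.
  have dge : z - 1 <= (dv B v)%:R.
    by move/hasPn: hv => /(_ v vV); rewrite -leNgt.
  set d := dv B v in dge d1 cBv *.
  have db : (d <= b)%N by rewrite -cB -cBv leq_addl.
  have cBv' : #|` Bv B v| = (b - d)%N by rewrite -cB -cBv addnK.
  have ltb : (b - d < b)%N by lia.
  have [z' [z'1 z'b]] := root_ex R (b - d).
  have IHv := IH _ ltb (Av A v) (Bv B v) cBv' (good_v v g) z' z'1 z'b.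
  rewrite cBv'; rewrite natrB // in z'b IHv *.
  have d1R : 1 <= (d%:R : R) by rewrite ler1n.
  have := num_case3 z1 z'1 zb z'b d1R dge.
  lra.
have hsum := sum_Phi_v g.
have hsB := sum_Bv hB; rewrite cB -/n -/k in hsB.
have k2 : (2 <= k)%N.
  have : (1 : R) < k%:R by lra.
  by rewrite (ltr_nat R 1 k).
have nr : (n - r = k - 1)%N by rewrite /k; lia.
rewrite -/n nr in hsum.
have hs1 : ((Phi A B * (k - 1))%N%:R : R) <= \sum_(v <- VB B) (Phi (Av A v) (Bv B v))%:R.
  by rewrite -natr_sum ler_nat.
have hs2 : \sum_(v <- VB B) ((Phi (Av A v) (Bv B v))%:R : R) <=
           \sum_(v <- VB B) (z - 3) * (#|` Bv B v|)%:R.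
  by rewrite big_seq [X in _ <= X]big_seq; apply: ler_sum => v vV; apply: hall.
have eqs : \sum_(v <- VB B) (z - 3) * ((#|` Bv B v|)%:R : R) = (z - 3) * ((b * k)%N)%:R.
  by rewrite -mulr_sumr -natr_sum; congr (_ * _%:R); exact: hsB.
rewrite eqs natrM in hs2.
rewrite natrM natrB in hs1; last by lia.
have kR : 2 <= (k%:R : R) by rewrite (ler_nat R 2 k).
set P := ((Phi A B)%:R : R) in hs1 hs2 *.
set K := (k%:R : R) in hk kR hs1 hs2 *.
set bb := (b%:R : R) in b0 b3R zb hs2 *.
have h3 : P * (K - 1) <= (z - 3) * (bb * K) by lra.
rewrite leNgt; apply/negP => hP.
have kpos : 0 < K - 1 by lra.
have : (z - 2) * bb * (K - 1) < P * (K - 1) by rewrite ltr_pM2r.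
nra.
Qed.

End Main.

Local Open Scope ring_scope.

Theorem mainTheorem4 (R : realType) (r : nat) (x : R) (b : nat)
    (A B : {fset {fset nat}}) :
  (3 <= r)%N -> 1 < x -> (0 < b)%N -> x * (x - 1) / 2 = b%:R ->
  admissible r 3 b A B ->
  (#|` A|%fset)%:R <= x * (x - 1) * (x - 2) / 6.
Proof.
move=> hr x1 bpos xb [hB hA cB hm].
have g : good r A B by split.
have hr0 : (0 < r)%N by lia.
have hP := main_ind hr0 cB g (ltW x1) xb.
have h3 : (3 * #|` A| <= Phi A B)%N.
  rewrite /Phi card_fset_sum1 big_distrr /= big_seq [X in (_ <= X)%N]big_seq.
  by apply: leq_sum => S SA; rewrite muln1; apply: hm.
have : ((3 * #|` A|)%N%:R : R) <= (Phi A B)%:R by rewrite ler_nat.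
rewrite natrM => h; rewrite -xb in hP.
have e : x * (x - 1) * (x - 2) / 6 = (x - 2) * (x * (x - 1) / 2) / 3 by field.
rewrite e; lra.
Qed.
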